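(* Each (s)-set is the union of countably many DC graphs.
   Context: A function on an open interval is DC if it is the difference of two convex functions. A function defined on a nonempty set $D\subset\mathbb{R}$ is DCR if it is the restriction of a DC function defined on $\mathbb{R}$. A nonempty closed set $S\subset\mathbb{R}^2$ is an (s)-set if there exists $r>0$ such that (a) $S\subset\bigcup_{i=1}^k\operatorname{graph} f_i$ for some DCR functions $f_i:[0,r]\to\mathbb{R}$ with $f_i(0)=(f_i)'_+(0)=0$, and (b) $S=\bigcup_{h\in H}\operatorname{graph} h$ for some family $H$ of continuous functions on $[0,r]$. A set $P\subset\mathbb{R}^2$ is a DC graph if it is a rotated copy (rotation around the origin) of $\operatorname{graph} f$ for a DCR function $f$ on some nonempty compact (possibly degenerate) interval $I\subset\mathbb{R}$. *)

(* Defs.v *)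
From Stdlib Require Import Reals.
Open Scope R_scope.

Definition convex_R (g : R -> R) : Prop :=
  forall x y t, 0 <= t <= 1 ->
    g (t * x + (1 - t) * y) <= t * g x + (1 - t) * g y.

Definition DC_R (F : R -> R) : Prop :=
  exists g h : R -> R, convex_R g /\ convex_R h /\ forall x, F x = g x - h x.

Definition DCR_on (D : R -> Prop) (f : R -> R) : Prop :=
  exists F : R -> R, DC_R F /\ forall x, D x -> f x = F x.

Definition Icc (a b : R) : R -> Prop := fun x => a <= x <= b.

Definition graph_on (D : R -> Prop) (f : R -> R) : R * R -> Prop :=
  fun p => D (fst p) /\ snd p = f (fst p).

Definition continuous_on_Icc (a b : R) (h : R -> R) : Prop :=
  forall x, a <= x <= b -> forall eps, 0 < eps -> exists delta, 0 < delta /\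
    forall y, a <= y <= b -> Rabs (y - x) < delta -> Rabs (h y - h x) < eps.

Definition right_deriv0_zero (r : R) (f : R -> R) : Prop :=
  forall eps, 0 < eps -> exists delta, 0 < delta /\
    forall t, 0 < t -> t < delta -> t <= r -> Rabs ((f t - f 0) / t) < eps.

Definition closed2 (S : R * R -> Prop) : Prop :=
  forall p, ~ S p -> exists e, 0 < e /\
    forall q, (fst q - fst p) ^ 2 + (snd q - snd p) ^ 2 < e ^ 2 -> ~ S q.

Definition s_set (S : R * R -> Prop) : Prop :=
  (exists p, S p) /\ closed2 S /\
  exists r, 0 < r /\
    (exists (k : nat) (f : nat -> R -> R),
        (forall i, (i < k)%nat ->
           DCR_on (Icc 0 r) (f i) /\ f i 0 = 0 /\ right_deriv0_zero r (f i)) /\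
        (forall p, S p -> exists i, (i < k)%nat /\ graph_on (Icc 0 r) (f i) p)) /\
    (exists H : (R -> R) -> Prop,
        (forall h, H h -> continuous_on_Icc 0 r h) /\
        (forall p, S p <-> exists h, H h /\ graph_on (Icc 0 r) h p)).

Definition rotate (theta : R) (p : R * R) : R * R :=
  (cos theta * fst p - sin theta * snd p, sin theta * fst p + cos theta * snd p).

Definition DC_graph (P : R * R -> Prop) : Prop :=
  exists (theta a b : R) (f : R -> R), a <= b /\ DCR_on (Icc a b) f /\
    forall p, P p <-> exists q, graph_on (Icc a b) f q /\ p = rotate theta q.

(* Main.v *)
Require Import Defs.
From Stdlib Require Import Reals Lra Lia List Psatz Classical ClassicalEpsilon Cantor.
Open Scope R_scope.


Lemma cont_of_eps f x :
  (forall eps, 0 < eps -> exists d, 0 < d /\ forall y, Rabs (y - x) < d -> Rabs (f y - f x) < eps) ->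
  continuity_pt f x.
Proof.
  intros H eps Heps. destruct (H eps Heps) as [d [Hd Hy]].
  exists d; split; [lra|]. intros y [_ Hy2]. apply Hy. exact Hy2.
Qed.

Lemma eps_of_cont f x : continuity_pt f x ->
  forall eps, 0 < eps -> exists d, 0 < d /\ forall y, Rabs (y - x) < d -> Rabs (f y - f x) < eps.
Proof.
  intros H eps Heps. destruct (H eps Heps) as [d [Hd Hy]].
  exists d; split; [lra|]. intros y Hyx.
  destruct (Req_dec y x) as [->|Hne].
  - unfold Rminus; rewrite Rplus_opp_r, Rabs_R0; lra.
  - apply (Hy y). split; [split; [exact I| auto] | exact Hyx].
Qed.

Lemma three_slope g u v w : convex_R g -> u < v < w ->
  (g v - g u) * (w - v) <= (g w - g v) * (v - u).
Proof.
  intros Hc [H1 H2].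
  set (t := (w - v) / (w - u)).
  assert (Ht : 0 <= t <= 1).
  { unfold t; split. unfold Rdiv; apply Rmult_le_pos; [lra| left; apply Rinv_0_lt_compat; lra].
    apply (Rmult_le_reg_r (w - u)); [lra|]. unfold Rdiv; rewrite Rmult_assoc, Rinv_l; lra. }
  assert (Hv : t * u + (1 - t) * w = v).
  { unfold t; field; lra. }
  pose proof (Hc u w t Ht) as Hc'. rewrite Hv in Hc'.
  assert (E1 : t * (w - u) = w - v) by (unfold t; field; lra).
  assert (E2 : (1 - t) * (w - u) = v - u) by (unfold t; field; lra).
  assert (Hwu : 0 < w - u) by lra.
  assert (H3 : g v * (w - u) <= (t * g u + (1 - t) * g w) * (w - u)) by (apply Rmult_le_compat_r; lra).
  replace ((t * g u + (1 - t) * g w) * (w - u)) with ((t * (w - u)) * g u + ((1 - t) * (w - u)) * g w) in H3 by ring.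
  rewrite E1, E2 in H3. nra.
Qed.

Lemma convex_cont g x : convex_R g -> continuity_pt g x.
Proof.
  intro Hc. apply cont_of_eps. intros eps Heps.
  set (K := Rabs (g (x + 1) - g x) + Rabs (g x - g (x - 1))).
  assert (HK : 0 <= K) by (unfold K; pose proof (Rabs_pos (g (x+1) - g x)); pose proof (Rabs_pos (g x - g (x-1))); lra).
  exists (Rmin 1 (eps / (K + 1))). split.
  { apply Rmin_pos; [lra|]. apply Rdiv_lt_0_compat; lra. }
  intros y Hy.
  assert (Hy1 : Rabs (y - x) < 1) by (eapply Rlt_le_trans; [exact Hy| apply Rmin_l]).
  assert (Hy2 : Rabs (y - x) < eps / (K + 1)) by (eapply Rlt_le_trans; [exact Hy| apply Rmin_r]).
  assert (Hb : Rabs (g y - g x) <= K * Rabs (y - x)).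
  { pose proof (Rle_abs (g (x + 1) - g x)) as A1. pose proof (Rle_abs (- (g (x + 1) - g x))) as A1'.
    rewrite Rabs_Ropp in A1'.
    pose proof (Rle_abs (g x - g (x - 1))) as A2. pose proof (Rle_abs (- (g x - g (x - 1)))) as A2'.
    rewrite Rabs_Ropp in A2'.
    destruct (Rtotal_order y x) as [Hlt|[Heq|Hgt]].
    - rewrite (Rabs_left (y - x)) by lra. apply Rabs_le.
      assert (Hyx : x - 1 < y) by (apply Rabs_def2 in Hy1; lra).
      destruct (Rlt_or_le (x - 1) y) as [_|]; [|lra].
      pose proof (three_slope g y x (x + 1) Hc ltac:(lra)) as T1.
      assert (T2 : g y <= g x + (x - y) * (g (x - 1) - g x)).
      { destruct (Req_dec y (x - 1)) as [E|E]. subst y. lra.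
        pose proof (three_slope g (x - 1) y x Hc ltac:(lra)) as T.
        assert (Eq : (g y - g (x - 1)) * (x - y) - (g x - g y) * (y - (x - 1))
                  = g y - (g x + (x - y) * (g (x - 1) - g x))) by ring.
        lra. }
      unfold K. split; nra.
    - subst y. replace (g x - g x) with 0 by ring. replace (x - x) with 0 by ring. rewrite Rabs_R0. lra.
    - rewrite (Rabs_right (y - x)) by lra. apply Rabs_le.
      assert (Hyx : y < x + 1) by (apply Rabs_def2 in Hy1; lra).
      pose proof (three_slope g (x - 1) x y Hc ltac:(lra)) as T1.
      pose proof (three_slope g x y (x + 1) Hc ltac:(lra)) as T2.
      unfold K. split; nra. }
  assert (K * Rabs (y - x) <= (K + 1) * Rabs (y - x)) by (pose proof (Rabs_pos (y - x)); nra).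
  assert ((K + 1) * Rabs (y - x) < eps).
  { apply (Rmult_lt_compat_l (K + 1)) in Hy2; [|lra].
    replace ((K + 1) * (eps / (K + 1))) with eps in Hy2 by (field; lra). exact Hy2. }
  lra.
Qed.


Lemma prod_le_div a b c : 0 < c -> a * c <= b * c -> a <= b.
Proof. intros Hc H. apply (Rmult_le_reg_r c); lra. Qed.

Lemma supp_line g x : convex_R g -> exists m, forall y, g x + m * (y - x) <= g y.
Proof.
  intro Hc.
  set (E := fun s => exists y, y < x /\ s * (x - y) = g x - g y).
  assert (Hb : bound E).
  { exists (g (x + 1) - g x). intros s [y [Hy Hs]].
    pose proof (three_slope g y x (x + 1) Hc ltac:(lra)) as T.
    apply (prod_le_div _ _ (x - y)); lra. }
  assert (Hne : exists s, E s).
  { exists (g x - g (x - 1)). exists (x - 1). split; [lra|ring]. }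
  destruct (completeness E Hb Hne) as [m [Hub Hlub]].
  exists m. intros y.
  destruct (Rtotal_order y x) as [Hlt|[Heq|Hgt]].
  - set (s := (g x - g y) / (x - y)).
    assert (Es : s * (x - y) = g x - g y) by (unfold s; field; lra).
    assert (Hs : s <= m) by (apply Hub; exists y; split; auto).
    nra.
  - subst; lra.
  - set (B := (g y - g x) / (y - x)).
    assert (EB : B * (y - x) = g y - g x) by (unfold B; field; lra).
    assert (HmB : m <= B).
    { apply Hlub. intros s [z [Hz Hs]].
      pose proof (three_slope g z x y Hc ltac:(lra)) as T.
      apply (prod_le_div _ _ ((x - z) * (y - x))). nra.
      nra. }
    nra.
Qed.

Definition convex_on (a b : R) (f : R -> R) : Prop :=
  forall x y t, a <= x <= b -> a <= y <= b -> 0 <= t <= 1 ->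
    f (t * x + (1 - t) * y) <= t * f x + (1 - t) * f y.

Lemma convex_on_R a b f : convex_R f -> convex_on a b f.
Proof. intros H x y t _ _ Ht. apply H; auto. Qed.

Lemma convex_R_of_on f : (forall a b, convex_on a b f) -> convex_R f.
Proof.
  intros H x y t Ht. apply (H (Rmin x y) (Rmax x y)); auto;
  split; try apply Rmin_l; try apply Rmin_r; try apply Rmax_l; try apply Rmax_r.
Qed.

Lemma convex_on_plus a b f g : convex_on a b f -> convex_on a b g ->
  convex_on a b (fun x => f x + g x).
Proof. intros Hf Hg x y t Hx Hy Ht. pose proof (Hf x y t Hx Hy Ht). pose proof (Hg x y t Hx Hy Ht). lra. Qed.

Lemma convex_on_sub a b a' b' f : a <= a' -> b' <= b -> convex_on a b f -> convex_on a' b' f.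
Proof. intros H1 H2 Hf x y t Hx Hy Ht. apply Hf; auto; lra. Qed.

Lemma convex_plus f g : convex_R f -> convex_R g -> convex_R (fun x => f x + g x).
Proof. intros Hf Hg x y t Ht. pose proof (Hf x y t Ht). pose proof (Hg x y t Ht). lra. Qed.

Lemma convex_scal c f : 0 <= c -> convex_R f -> convex_R (fun x => c * f x).
Proof. intros Hc Hf x y t Ht. pose proof (Hf x y t Ht). nra. Qed.

Lemma convex_const c : convex_R (fun _ => c).
Proof. intros x y t Ht. nra. Qed.

Lemma convex_max f g : convex_R f -> convex_R g -> convex_R (fun x => Rmax (f x) (g x)).
Proof.
  intros Hf Hg x y t Ht. pose proof (Hf x y t Ht). pose proof (Hg x y t Ht).
  pose proof (Rmax_l (f x) (g x)). pose proof (Rmax_r (f x) (g x)).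
  pose proof (Rmax_l (f y) (g y)). pose proof (Rmax_r (f y) (g y)).
  apply Rmax_lub; nra.
Qed.

Lemma convex_ext f g : (forall x, f x = g x) -> convex_R f -> convex_R g.
Proof. intros E H x y t Ht. rewrite <- !E. apply H; auto. Qed.

Lemma local_convex a b f :
  (forall x, continuity_pt f x) ->
  (forall x, a <= x <= b ->
     (exists m, forall y, a <= y <= b -> f x + m * (y - x) <= f y) \/
     (exists d, 0 < d /\ convex_on (Rmax a (x - d)) (Rmin b (x + d)) f)) ->
  convex_on a b f.
Proof.
  intros Hcont Hloc.
  assert (Main : forall x y t, a <= x -> x < y -> y <= b -> 0 <= t <= 1 ->
            f (t * x + (1 - t) * y) <= t * f x + (1 - t) * f y).
  { intros x y t Hax Hxy Hyb Ht.
    destruct (Rle_or_lt (f (t * x + (1 - t) * y)) (t * f x + (1 - t) * f y)) as [OK|Bad]; [exact OK|].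
    exfalso.
    set (sl := (f y - f x) / (y - x)).
    set (phi := fun z => f z - (f x + sl * (z - x))).
    assert (Hphic : forall z, continuity_pt phi z).
    { intro z. unfold phi. apply continuity_pt_minus; auto.
      apply continuity_pt_plus. apply continuity_pt_const; intros u v; auto.
      apply continuity_pt_mult. apply continuity_pt_const; intros u v; auto.
      apply continuity_pt_minus. apply derivable_continuous_pt, derivable_pt_id.
      apply continuity_pt_const; intros u v; auto. }
    assert (phx : phi x = 0) by (unfold phi; ring).
    assert (phy : phi y = 0) by (unfold phi, sl; field; lra).
    set (z0 := t * x + (1 - t) * y).
    assert (Hz0 : x <= z0 <= y) by (unfold z0; split; nra).
    assert (phz0 : phi z0 > 0).
    { unfold phi. fold z0 in Bad.
      assert (E : f x + sl * (z0 - x) = t * f x + (1 - t) * f y).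
      { unfold z0, sl. field. lra. }
      lra. }
    destruct (continuity_ab_maj phi x y ltac:(lra) (fun c _ => Hphic c)) as [zm [Hzm Hzmr]].
    set (M := phi zm).
    assert (HM : M > 0) by (pose proof (Hzm z0 Hz0); unfold M; lra).
    set (E := fun z => x <= z <= y /\ phi z = M).
    assert (Hb : bound E) by (exists y; intros z [Hz _]; lra).
    assert (Hne : exists z, E z) by (exists zm; split; auto).
    destruct (completeness E Hb Hne) as [s [Hub Hlub]].
    assert (Hzms : zm <= s) by (apply Hub; split; auto).
    assert (Hsy : s <= y) by (apply Hlub; intros z [Hz _]; lra).
    assert (Hs : phi s = M).
    { destruct (Rle_lt_or_eq_dec (phi s) M) as [Hlt|Heq]; [apply Hzm; lra| |exact Heq].
      exfalso.
      destruct (eps_of_cont phi s (Hphic s) (M - phi s) ltac:(lra)) as [d [Hd Hdd]].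
      assert (Hup : is_upper_bound E (s - d / 2)).
      { intros z [Hz Hpz]. destruct (Rle_or_lt z (s - d / 2)) as [|Hzs]; [auto|].
        exfalso. assert (z <= s) by (apply Hub; split; auto).
        assert (Rabs (z - s) < d) by (apply Rabs_def1; lra).
        pose proof (Hdd z H0). apply Rabs_def2 in H1. lra. }
      pose proof (Hlub _ Hup). lra. }
    assert (Hxs : x < s).
    { destruct (Req_dec s x); [subst; lra|]. lra. }
    assert (Hsy' : s < y) by (destruct (Req_dec s y); [subst; lra|lra]).
    destruct (Hloc s ltac:(lra)) as [[m Hm]|[d [Hd Hcd]]].
    - pose proof (Hm x ltac:(lra)) as H1. pose proof (Hm y ltac:(lra)) as H2.
      assert (Hphi_s : phi s = M) by exact Hs. unfold phi in Hs, phx, phy.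
      assert (Hsl : sl * (y - x) = f y - f x) by (unfold sl; field; lra).
      nra.
    - set (e := Rmin d (Rmin (s - x) (y - s)) / 2).
      assert (He : 0 < e) by (assert (0 < Rmin d (Rmin (s - x) (y - s))) by (apply Rmin_pos; [lra|apply Rmin_pos; lra]); unfold e; lra).
      assert (He1 : e < d) by (unfold e; pose proof (Rmin_l d (Rmin (s - x) (y - s))); lra).
      assert (He2 : e < s - x) by (unfold e; pose proof (Rmin_r d (Rmin (s - x) (y - s))); pose proof (Rmin_l (s - x) (y - s)); pose proof (Rmin_l d (Rmin (s - x) (y - s))); lra).
      assert (He3 : e < y - s) by (unfold e; pose proof (Rmin_r d (Rmin (s - x) (y - s))); pose proof (Rmin_r (s - x) (y - s)); lra).
      assert (I1 : Rmax a (s - d) <= s - e <= Rmin b (s + d)).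
      { split; [apply Rmax_lub; lra| apply Rmin_glb; lra]. }
      assert (I2 : Rmax a (s - d) <= s + e <= Rmin b (s + d)).
      { split; [apply Rmax_lub; lra| apply Rmin_glb; lra]. }
      pose proof (Hcd (s - e) (s + e) (1/2) I1 I2 ltac:(lra)) as Hc.
      replace (1 / 2 * (s - e) + (1 - 1 / 2) * (s + e)) with s in Hc by field.
      assert (Hp : phi s <= 1/2 * phi (s - e) + (1 - 1/2) * phi (s + e)).
      { unfold phi. lra. }
      pose proof (Hzm (s - e) ltac:(lra)). pose proof (Hzm (s + e) ltac:(lra)).
      fold M in H, H0.
      assert (phi (s + e) = M) by lra.
      assert (s + e <= s) by (apply Hub; split; [lra|auto]).
      lra. }
  intros x y t Hx Hy Ht.
  destruct (Rtotal_order x y) as [Hlt|[Heq|Hgt]].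
  - apply Main; lra.
  - subst. replace (t * y + (1 - t) * y) with y by ring. lra.
  - replace (t * x + (1 - t) * y) with ((1 - t) * y + (1 - (1 - t)) * x) by ring.
    replace (t * f x + (1 - t) * f y) with ((1 - t) * f y + (1 - (1 - t)) * f x) by ring.
    apply Main; lra.
Qed.


Lemma convex_on_ext a b f g : (forall x, f x = g x) -> convex_on a b f -> convex_on a b g.
Proof. intros E H x y t Hx Hy Ht. rewrite <- !E. apply H; auto. Qed.

Lemma continuity_pt_ext f g x : (forall y, f y = g y) -> continuity_pt f x -> continuity_pt g x.
Proof. intros E H. apply (continuity_pt_locally_ext f g 1 x); auto; lra. Qed.

Lemma DC_cont g x : DC_R g -> continuity_pt g x.
Proof.
  intros [p [q [Hp [Hq E]]]].
  apply (continuity_pt_ext (fun x => p x - q x)); [intro; symmetry; apply E|].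
  apply continuity_pt_minus; apply convex_cont; auto.
Qed.

Lemma DC_min g1 g2 : DC_R g1 -> DC_R g2 -> DC_R (fun x => Rmin (g1 x) (g2 x)).
Proof.
  intros [p1 [q1 [Hp1 [Hq1 E1]]]] [p2 [q2 [Hp2 [Hq2 E2]]]].
  exists (fun x => p1 x + p2 x), (fun x => Rmax (q1 x + p2 x) (q2 x + p1 x)).
  split; [apply convex_plus; auto|]. split; [apply convex_max; apply convex_plus; auto|].
  intro x. rewrite E1, E2. unfold Rmin, Rmax.
  destruct (Rle_dec (p1 x - q1 x) (p2 x - q2 x)); destruct (Rle_dec (q1 x + p2 x) (q2 x + p1 x)); lra.
Qed.

Lemma DC_const c : DC_R (fun _ => c).
Proof. exists (fun _ => c), (fun _ => 0). split; [apply convex_const|]. split; [apply convex_const|]. intro; ring. Qed.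


Fixpoint minl (F : nat -> R -> R) (l : list nat) : R -> R :=
  match l with
  | nil => fun _ => 0
  | i :: l' => match l' with
               | nil => F i
               | _ => fun x => Rmin (F i x) (minl F l' x)
               end
  end.

Lemma minl_le F l i x : In i l -> minl F l x <= F i x.
Proof.
  induction l as [|j l IH]; simpl; [tauto|].
  destruct l as [|k l'].
  - intros [->|[]]; lra.
  - intros [->|Hin]. apply Rmin_l. eapply Rle_trans; [apply Rmin_r| apply IH; auto].
Qed.

Lemma minl_eq F l x v : l <> nil -> (forall i, In i l -> F i x = v) -> minl F l x = v.
Proof.
  induction l as [|j l IH]; simpl; [tauto|].
  intros _ H. destruct l as [|k l'].
  - apply H; auto.
  - rewrite IH; [| discriminate | intros; apply H; auto]. rewrite H; auto. unfold Rmin; destruct Rle_dec; lra.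
Qed.

Lemma minl_DC F l : (forall i, In i l -> DC_R (F i)) -> DC_R (minl F l).
Proof.
  induction l as [|j l IH]; simpl; intros H.
  - apply DC_const.
  - destruct l as [|k l'].
    + apply H; auto.
    + apply DC_min; [apply H; auto|]. apply IH. intros; apply H; auto.
Qed.

Definition ctrl (F : nat -> R -> R) (l : list nat) (C : R -> R) : Prop :=
  convex_R C /\ forall a b h, (forall x, continuity_pt h x) ->
    (forall x, a <= x <= b -> exists i, In i l /\ h x = F i x) ->
    convex_on a b (fun x => C x + h x).

Lemma sum_ctrl (Q : nat -> (R -> R) -> Prop) (m : list nat) :
  (forall j C, Q j C -> convex_R C) ->
  (forall j, In j m -> exists C, Q j C) ->
  exists D, convex_R D /\ forall j, In j m -> exists C, Q j C /\ convex_R (fun x => D x - C x).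
Proof.
  intros HQ. induction m as [|j m IH]; intros H.
  - exists (fun _ => 0). split; [apply convex_const| intros j []].
  - destruct IH as [D' [HD' HD'j]]. { intros; apply H; simpl; auto. }
    destruct (H j (or_introl eq_refl)) as [Cj HCj].
    exists (fun x => D' x + Cj x). split; [apply convex_plus; eauto|].
    intros j' [<-|Hin].
    + exists Cj. split; auto. eapply convex_ext; [|exact HD']. intro; simpl; ring.
    + destruct (HD'j j' Hin) as [C' [HC' HcC']]. exists C'. split; auto.
      eapply convex_ext; [|apply (convex_plus _ _ HcC' (HQ _ _ HCj))]. intro; simpl; ring.
Qed.

Lemma ST_aux F n : forall l, (length l < n)%nat -> (forall i, In i l -> DC_R (F i)) -> exists C, ctrl F l C.
Proof.
  induction n as [|n IHn]; intros l Hlen HDC; [lia|].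
  assert (Hsub : forall j, In j l -> exists C, ctrl F (remove Nat.eq_dec j l) C).
  { intros j Hj. apply IHn.
    pose proof (remove_length_lt Nat.eq_dec l j Hj). lia.
    intros i Hi. apply in_remove in Hi. apply HDC; tauto. }
  destruct (sum_ctrl (fun j C => ctrl F (remove Nat.eq_dec j l) C) l) as [D [HD HDj]].
  { intros j C [HC _]; exact HC. } { exact Hsub. }
  destruct (minl_DC F l HDC) as [p [q [Hp [Hq Epq]]]].
  exists (fun x => q x + D x). split; [apply convex_plus; auto|].
  intros a b h Hh Hsel.
  apply local_convex.
  { intro x. apply continuity_pt_plus; [apply continuity_pt_plus; apply convex_cont; auto| auto]. }
  intros x Hx.
  destruct (Hsel x Hx) as [i0 [Hi0 Ehi0]].
  destruct (classic (exists j, In j l /\ F j x <> h x)) as [[j [Hj Hne]]|Hall].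
  - right.
    destruct (HDj j Hj) as [Cj [[HCj HCjs] HDCj]].
    assert (Hc : continuity_pt (fun y => F j y - h y) x).
    { apply continuity_pt_minus; auto. apply DC_cont; auto. }
    destruct (eps_of_cont _ _ Hc (Rabs (F j x - h x))) as [d [Hd Hdd]].
    { apply Rabs_pos_lt. lra. }
    exists (d / 2). split; [lra|].
    apply (convex_on_ext _ _ (fun y => (q y + (D y - Cj y)) + (Cj y + h y))).
    { intro; ring. }
    apply convex_on_plus.
    { apply convex_on_R. apply convex_plus; auto. }
    apply HCjs; auto.
    intros y Hy.
    assert (Hy' : a <= y <= b) by (pose proof (Rmax_l a (x - d/2)); pose proof (Rmin_l b (x + d/2)); lra).
    destruct (Hsel y Hy') as [i [Hi Ei]].
    exists i. split; auto. apply in_in_remove; auto.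
    intros ->.
    assert (Rabs (y - x) < d).
    { pose proof (Rmax_r a (x - d/2)); pose proof (Rmin_r b (x + d/2)). apply Rabs_def1; lra. }
    pose proof (Hdd y H) as Hk. rewrite Ei in Hk.
    replace (F j y - F j y - (F j x - h x)) with (- (F j x - h x)) in Hk by ring.
    rewrite Rabs_Ropp in Hk. lra.
  - left.
    assert (Hmx : minl F l x = h x).
    { apply minl_eq. intros ->; destruct Hi0.
      intros i Hi. destruct (Req_dec (F i x) (h x)); auto. exfalso; apply Hall; eauto. }
    assert (Hconv : convex_R (fun y => q y + D y + minl F l y)).
    { apply (convex_ext (fun y => p y + D y)). intro y. rewrite Epq. ring. apply convex_plus; auto. }
    destruct (supp_line _ x Hconv) as [m Hm].
    exists m. intros y Hy.
    destruct (Hsel y Hy) as [i [Hi Ei]].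
    pose proof (minl_le F l i y Hi). pose proof (Hm y). lra.
Qed.


Lemma selection_DC (F : nat -> R -> R) (l : list nat) (h : R -> R) :
  (forall i, In i l -> DC_R (F i)) ->
  (forall x, continuity_pt h x) ->
  (forall x, exists i, In i l /\ h x = F i x) ->
  DC_R h.
Proof.
  intros HDC Hh Hsel.
  destruct (ST_aux F (S (length l)) l ltac:(lia) HDC) as [C [HC HCs]].
  destruct (ST_aux (fun i x => - F i x) (S (length l)) l ltac:(lia)) as [C' [HC' HC's]].
  { intros i Hi. destruct (HDC i Hi) as [p [q [Hp [Hq E]]]]. exists q, p. repeat split; auto.
    intro x; rewrite E; ring. }
  assert (H1 : convex_R (fun x => C x + h x)).
  { apply convex_R_of_on. intros a b. apply HCs; auto. }
  assert (H2 : convex_R (fun x => C' x + - h x)).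
  { apply convex_R_of_on. intros a b. apply HC's; auto.
    intro x. apply continuity_pt_opp; auto.
    intros x _. destruct (Hsel x) as [i [Hi E]]. exists i; split; auto. rewrite E; auto. }
  exists (fun x => / 2 * ((C x + h x) + C' x)), (fun x => / 2 * (C x + (C' x + - h x))).
  split. apply convex_scal; [lra|]. apply convex_plus; auto.
  split. apply convex_scal; [lra|]. apply convex_plus; auto.
  intro x. field.
Qed.


Lemma fmax k : forall (P : R -> Prop) (v : nat -> R),
  (forall w, P w -> exists i, (i < k)%nat /\ w = v i) -> (exists w, P w) ->
  exists m, P m /\ forall w, P w -> w <= m.
Proof.
  induction k as [|k IH]; intros P v Hv [w0 Hw0].
  - destruct (Hv w0 Hw0) as [i [Hi _]]; lia.
  - destruct (classic (exists w, P w /\ exists i, (i < k)%nat /\ w = v i)) as [Hex|Hno].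
    + destruct (IH (fun w => P w /\ exists i, (i < k)%nat /\ w = v i) v) as [m [[Pm _] Hm]].
      { intros w [_ H]; exact H. } { exact Hex. }
      destruct (classic (P (v k))) as [Pk|nPk].
      * exists (Rmax m (v k)). split.
        { unfold Rmax; destruct Rle_dec; auto. }
        intros w Pw. destruct (Hv w Pw) as [i [Hi ->]].
        destruct (Nat.eq_dec i k) as [->|Hne]; [apply Rmax_r|].
        eapply Rle_trans; [apply Hm; split; auto; exists i; split; auto; lia| apply Rmax_l].
      * exists m. split; auto. intros w Pw. destruct (Hv w Pw) as [i [Hi ->]].
        destruct (Nat.eq_dec i k) as [->|Hne]; [tauto|].
        apply Hm; split; auto; exists i; split; auto; lia.
    + exists w0. split; auto. intros w Pw. destruct (Hv w Pw) as [i [Hi ->]].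
      destruct (Hv w0 Hw0) as [i0 [Hi0 ->]].
      assert (i = k). { destruct (Nat.eq_dec i k); auto. exfalso; apply Hno. exists (v i); split; auto. exists i; split; auto; lia. }
      assert (i0 = k). { destruct (Nat.eq_dec i0 k); auto. exfalso; apply Hno. exists (v i0); split; auto. exists i0; split; auto; lia. }
      subst; lra.
Qed.

Lemma fmin_delta k : forall (Q : nat -> R -> Prop),
  (forall i d d', 0 < d' <= d -> Q i d -> Q i d') ->
  (forall i, (i < k)%nat -> exists d, 0 < d /\ Q i d) ->
  exists d, 0 < d /\ forall i, (i < k)%nat -> Q i d.
Proof.
  induction k as [|k IH]; intros Q Hm H.
  - exists 1; split; [lra| intros; lia].
  - destruct (IH Q Hm) as [d1 [Hd1 H1]]. { intros; apply H; lia. }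
    destruct (H k ltac:(lia)) as [d2 [Hd2 H2]].
    exists (Rmin d1 d2). split; [apply Rmin_pos; auto|].
    intros i Hi. destruct (Nat.eq_dec i k) as [->|Hne].
    + apply (Hm k d2); auto. split; [apply Rmin_pos; auto| apply Rmin_r].
    + apply (Hm i d1); [split; [apply Rmin_pos; auto| apply Rmin_l]| apply H1; lia].
Qed.

Lemma gap k : forall (P : nat -> Prop) (v : nat -> R) y0,
  exists e, y0 < e /\ forall i, (i < k)%nat -> P i -> y0 < v i -> e < v i.
Proof.
  induction k as [|k IH]; intros P v y0.
  - exists (y0 + 1); split; [lra| intros; lia].
  - destruct (IH P v y0) as [e [He H]].
    destruct (Rlt_or_le y0 (v k)) as [Hk|Hk].
    + exists (Rmin e ((y0 + v k) / 2)). split; [apply Rmin_glb_lt; lra|].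
      intros i Hi Pi Hv. destruct (Nat.eq_dec i k) as [->|Hne].
      * pose proof (Rmin_r e ((y0 + v k) / 2)); lra.
      * pose proof (Rmin_l e ((y0 + v k) / 2)); pose proof (H i ltac:(lia) Pi Hv); lra.
    + exists e. split; auto. intros i Hi Pi Hv. destruct (Nat.eq_dec i k) as [->|Hne]; [lra|].
      apply H; auto; lia.
Qed.

Definition qn (n : nat) : R :=
  let (p, m) := Cantor.of_nat n in
  let (s, t) := Cantor.of_nat p in (INR s - INR t) / INR (S m).

Lemma Z_as_nat (z : Z) : exists s t : nat, IZR z = INR s - INR t.
Proof.
  destruct z as [|p|p].
  - exists 0%nat, 0%nat. simpl; ring.
  - exists (Pos.to_nat p), 0%nat. rewrite INR_IPR. change (IZR (Zpos p)) with (IPR p). change (INR 0) with 0. ring.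
  - exists 0%nat, (Pos.to_nat p). rewrite INR_IPR. change (IZR (Zneg p)) with (- IPR p). change (INR 0) with 0. ring.
Qed.

Lemma qn_dense x y : x < y -> exists n, x < qn n < y.
Proof.
  intro Hxy.
  destruct (INR_archimed (y - x) 1 ltac:(lra)) as [m Hm].
  set (N := INR (S m)).
  assert (HN : N * (y - x) > 1).
  { unfold N. rewrite S_INR. nra. }
  assert (HN0 : 0 < N) by (unfold N; apply lt_0_INR; lia).
  destruct (archimed (x * N)) as [A1 A2].
  destruct (Z_as_nat (up (x * N))) as [s [t Est]].
  exists (Cantor.to_nat (Cantor.to_nat (s, t), m)).
  unfold qn. rewrite Cantor.cancel_of_to, Cantor.cancel_of_to. fold N.
  rewrite <- Est.
  split.
  - apply (Rmult_lt_reg_r N); auto. unfold Rdiv. rewrite Rmult_assoc, Rinv_l; lra.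
  - apply (Rmult_lt_reg_r N); auto. unfold Rdiv. rewrite Rmult_assoc, Rinv_l; nra.
Qed.

Lemma lip_comp g phi x :
  (forall y, Rabs (phi y - phi x) <= Rabs (y - x)) -> continuity_pt g (phi x) ->
  continuity_pt (fun y => g (phi y)) x.
Proof.
  intros Hl Hg. apply cont_of_eps. intros eps Heps.
  destruct (eps_of_cont g (phi x) Hg eps Heps) as [d [Hd H]].
  exists d. split; auto. intros y Hy. apply H. pose proof (Hl y); lra.
Qed.

Lemma abs_le_helper A B : -B <= A <= B -> Rabs A <= B.
Proof. intros; apply Rabs_le; lra. Qed.

Lemma Rmin_lip c y x : Rabs (Rmin y c - Rmin x c) <= Rabs (y - x).
Proof.
  pose proof (Rle_abs (y - x)) as H1; pose proof (Rle_abs (- (y - x))) as H2; rewrite Rabs_Ropp in H2.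
  apply abs_le_helper. unfold Rmin; destruct (Rle_dec y c); destruct (Rle_dec x c); lra.
Qed.

Lemma Rmax_lip c y x : Rabs (Rmax y c - Rmax x c) <= Rabs (y - x).
Proof.
  pose proof (Rle_abs (y - x)) as H1; pose proof (Rle_abs (- (y - x))) as H2; rewrite Rabs_Ropp in H2.
  apply abs_le_helper. unfold Rmax; destruct (Rle_dec y c); destruct (Rle_dec x c); lra.
Qed.

Definition clamp (al be x : R) := Rmin be (Rmax al x).

Lemma clamp_lip al be y x : al <= be -> Rabs (clamp al be y - clamp al be x) <= Rabs (y - x).
Proof.
  intros H. pose proof (Rle_abs (y - x)) as H1; pose proof (Rle_abs (- (y - x))) as H2; rewrite Rabs_Ropp in H2.
  apply abs_le_helper. unfold clamp, Rmin, Rmax. repeat destruct Rle_dec; lra.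
Qed.

Lemma clamp_in al be x : al <= be -> al <= clamp al be x <= be.
Proof. intros H. unfold clamp, Rmin, Rmax. repeat destruct Rle_dec; lra. Qed.

Lemma clamp_id al be x : al <= x <= be -> clamp al be x = x.
Proof. intros H. unfold clamp, Rmin, Rmax. repeat destruct Rle_dec; lra. Qed.

Lemma glue al be u g1 g2 : al <= be -> continuous_on_Icc al be u ->
  (forall x, continuity_pt g1 x) -> (forall x, continuity_pt g2 x) ->
  g1 al = u al -> g2 be = u be ->
  let ut := fun x => u (clamp al be x) + (g1 (Rmin x al) - g1 al) + (g2 (Rmax x be) - g2 be) in
  (forall x, continuity_pt ut x) /\ (forall x, x < al -> ut x = g1 x) /\
  (forall x, al <= x <= be -> ut x = u x) /\ (forall x, be < x -> ut x = g2 x).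
Proof.
  intros Hab Hu Hg1 Hg2 E1 E2 ut.
  split; [|split; [|split]].
  - intro x. unfold ut.
    apply continuity_pt_plus; [apply continuity_pt_plus|].
    + apply cont_of_eps. intros eps Heps.
      destruct (Hu (clamp al be x) (clamp_in al be x Hab) eps Heps) as [d [Hd H]].
      exists d; split; auto. intros y Hy. apply H. apply clamp_in; auto.
      pose proof (clamp_lip al be y x Hab); lra.
    + apply continuity_pt_minus; [|apply continuity_pt_const; intros ? ?; auto].
      apply (lip_comp g1 (fun y => Rmin y al)); auto. intro; apply Rmin_lip.
    + apply continuity_pt_minus; [|apply continuity_pt_const; intros ? ?; auto].
      apply (lip_comp g2 (fun y => Rmax y be)); auto. intro; apply Rmax_lip.
  - intros x Hx. unfold ut. rewrite (Rmin_left x al) by lra. rewrite (Rmax_right x be) by lra.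
    unfold clamp. rewrite (Rmax_left al x) by lra. rewrite (Rmin_right be al) by lra. lra.
  - intros x Hx. unfold ut. rewrite clamp_id by auto.
    rewrite (Rmin_right x al) by lra. rewrite (Rmax_right x be) by lra. ring.
  - intros x Hx. unfold ut. rewrite (Rmin_right x al) by lra. rewrite (Rmax_left x be) by lra.
    unfold clamp. rewrite (Rmax_right al x) by lra. rewrite (Rmin_left be x) by lra. lra.
Qed.


Definition umax (S : R * R -> Prop) (d y : R) : R :=
  epsilon (inhabits 0) (fun v => S (y, v) /\ v < d /\ forall w, S (y, w) -> w < d -> w <= v).

Definition Cond (S : R * R -> Prop) (r a b d : R) : Prop :=
  Rmax 0 a <= Rmin r b /\
  (forall y, Rmax 0 a <= y <= Rmin r b -> exists v, S (y, v) /\ v < d) /\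
  (forall y, Rmax 0 a <= y <= Rmin r b -> ~ S (y, d)).

Definition Ssub (S : R * R -> Prop) r k (FF : nat -> R -> R) :=
  forall p, S p -> (0 <= fst p <= r) /\ exists i, (i < k)%nat /\ snd p = FF i (fst p).

Definition HHprop (S : R * R -> Prop) r :=
  forall p, S p -> exists h, continuous_on_Icc 0 r h /\ h (fst p) = snd p /\
     forall y, 0 <= y <= r -> S (y, h y).

Lemma umax_spec S r k FF y d : Ssub S r k FF -> (exists v, S (y, v) /\ v < d) ->
  S (y, umax S d y) /\ umax S d y < d /\ forall w, S (y, w) -> w < d -> w <= umax S d y.
Proof.
  intros HS Hex. unfold umax. apply epsilon_spec.
  destruct (fmax k (fun w => S (y, w) /\ w < d) (fun i => FF i y)) as [m [[H1 H2] H3]].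
  - intros w [Hw _]. destruct (HS _ Hw) as [_ [i [Hi E]]]. exists i. split; auto.
  - exact Hex.
  - exists m. repeat split; auto.
Qed.

Lemma ball_lem a b e : 0 < e -> Rabs a < e / 2 -> Rabs b < e / 2 -> a ^ 2 + b ^ 2 < e ^ 2.
Proof.
  intros He Ha Hb. apply Rabs_def2 in Ha. apply Rabs_def2 in Hb.
  replace (a ^ 2) with (a * a) by ring. replace (b ^ 2) with (b * b) by ring.
  replace (e ^ 2) with (e * e) by ring. nra.
Qed.

Lemma u_cont S r k FF a b d :
  Ssub S r k FF -> HHprop S r -> closed2 S -> (forall i, (i < k)%nat -> DC_R (FF i)) ->
  Cond S r a b d -> continuous_on_Icc (Rmax 0 a) (Rmin r b) (umax S d).
Proof.
  intros HS HH Hcl HFF [Hab [Hex Hnd]].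
  assert (Hal : 0 <= Rmax 0 a) by apply Rmax_l.
  assert (Hbe : Rmin r b <= r) by apply Rmin_l.
  intros x0 Hx0 eps Heps.
  destruct (umax_spec S r k FF x0 d HS (Hex x0 Hx0)) as [S0 [Lt0 Max0]].
  set (v0 := umax S d x0) in *.
  destruct (HH (x0, v0) S0) as [h [Hhc [Hh0 Hhs]]]. simpl in Hh0.
  destruct (Hhc x0 ltac:(lra) (Rmin eps (d - v0)) ltac:(apply Rmin_pos; lra)) as [d1 [Hd1 Hh1]].
  destruct (fmin_delta k (fun i dl => forall y, Rmax 0 a <= y <= Rmin r b -> Rabs (y - x0) < dl ->
              S (y, FF i y) -> FF i y < d -> FF i y < v0 + eps)) as [d2 [Hd2 Hh2]].
  { intros i dl dl' Hdl H y Hy Hyx. apply H; auto. lra. }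
  { intros i Hi.
    pose proof (eps_of_cont _ _ (DC_cont (FF i) x0 (HFF i Hi))) as Hc.
    destruct (Rlt_or_le (FF i x0) (v0 + eps)) as [C1|C1].
    - destruct (Hc (v0 + eps - FF i x0) ltac:(lra)) as [dl [Hdl H]].
      exists dl. split; auto. intros y Hy Hyx _ _. pose proof (H y Hyx) as Hk. apply Rabs_def2 in Hk. lra.
    - destruct (Rlt_or_le d (FF i x0)) as [C2|C2].
      + destruct (Hc (FF i x0 - d) ltac:(lra)) as [dl [Hdl H]].
        exists dl. split; auto. intros y Hy Hyx _ Hlt. pose proof (H y Hyx) as Hk. apply Rabs_def2 in Hk. lra.
      + assert (HnS : ~ S (x0, FF i x0)).
        { intro HS0. destruct (Rle_lt_or_eq_dec _ _ C2) as [C3|C3].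
          - pose proof (Max0 _ HS0 C3). lra.
          - rewrite C3 in HS0. apply (Hnd x0 Hx0 HS0). }
        destruct (Hcl _ HnS) as [e [He Hball]]. simpl in Hball.
        destruct (Hc (e / 2) ltac:(lra)) as [dl [Hdl H]].
        exists (Rmin dl (e / 2)). split; [apply Rmin_pos; lra|].
        intros y Hy Hyx HSy _. exfalso. apply (Hball (y, FF i y)); auto. simpl.
        apply ball_lem; auto.
        * pose proof (Rmin_r dl (e / 2)); lra.
        * apply H. pose proof (Rmin_l dl (e / 2)); lra. }
  exists (Rmin d1 d2). split; [apply Rmin_pos; auto|].
  intros y Hy Hyx.
  assert (Hyx1 : Rabs (y - x0) < d1) by (pose proof (Rmin_l d1 d2); lra).
  assert (Hyx2 : Rabs (y - x0) < d2) by (pose proof (Rmin_r d1 d2); lra).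
  destruct (umax_spec S r k FF y d HS (Hex y Hy)) as [Sy [Lty Maxy]].
  pose proof (Hh1 y ltac:(lra) Hyx1) as Hk. rewrite Hh0 in Hk. apply Rabs_def2 in Hk.
  pose proof (Rmin_l eps (d - v0)). pose proof (Rmin_r eps (d - v0)).
  assert (Hlow : h y <= umax S d y) by (apply Maxy; [apply Hhs; lra| lra]).
  destruct (HS _ Sy) as [_ [i [Hi Ei]]]. simpl in Ei.
  pose proof (Hh2 i Hi y Hy Hyx2) as Hup. rewrite <- Ei in Hup.
  specialize (Hup Sy Lty).
  apply Rabs_def1; fold v0; lra.
Qed.


Lemma u_DCR S r k FF a b d :
  Ssub S r k FF -> HHprop S r -> closed2 S -> (forall i, (i < k)%nat -> DC_R (FF i)) ->
  Cond S r a b d -> DCR_on (Icc (Rmax 0 a) (Rmin r b)) (umax S d).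
Proof.
  intros HS HH Hcl HFF Hc.
  pose proof (u_cont S r k FF a b d HS HH Hcl HFF Hc) as Hu.
  destruct Hc as [Hab [Hex Hnd]].
  set (al := Rmax 0 a) in *. set (be := Rmin r b) in *.
  assert (Hsel : forall y, al <= y <= be -> exists i, (i < k)%nat /\ umax S d y = FF i y).
  { intros y Hy. destruct (umax_spec S r k FF y d HS (Hex y Hy)) as [Sy _].
    destruct (HS _ Sy) as [_ [i [Hi E]]]. exists i; split; auto. }
  destruct (Hsel al ltac:(lra)) as [i0 [Hi0 E0]].
  destruct (Hsel be ltac:(lra)) as [i1 [Hi1 E1]].
  destruct (glue al be (umax S d) (FF i0) (FF i1) Hab Hu
              (fun x => DC_cont _ x (HFF i0 Hi0)) (fun x => DC_cont _ x (HFF i1 Hi1))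
              (eq_sym E0) (eq_sym E1)) as [Hc [Hl [Hm Hr]]].
  set (ut := fun x => umax S d (clamp al be x) + (FF i0 (Rmin x al) - FF i0 al) + (FF i1 (Rmax x be) - FF i1 be)) in *.
  exists ut. split.
  - apply (selection_DC FF (seq 0 k)).
    + intros i Hi. apply in_seq in Hi. apply HFF. lia.
    + exact Hc.
    + intro x. destruct (Rlt_or_le x al) as [H1|H1]; [|destruct (Rle_or_lt x be) as [H2|H2]].
      * exists i0. split; [apply in_seq; lia| apply Hl; lra].
      * destruct (Hsel x ltac:(lra)) as [i [Hi Ei]]. exists i. split; [apply in_seq; lia|].
        transitivity (umax S d x); [apply Hm; lra| exact Ei].
      * exists i1. split; [apply in_seq; lia| apply Hr; lra].
  - intros x Hx. unfold Icc in Hx. symmetry; apply Hm; auto.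
Qed.

Lemma cover S r k FF p :
  Ssub S r k FF -> HHprop S r -> closed2 S -> S p ->
  exists n1 n3 n4, Cond S r (qn n1) (qn n3) (qn n4) /\
     Rmax 0 (qn n1) <= fst p <= Rmin r (qn n3) /\ snd p = umax S (qn n4) (fst p).
Proof.
  intros HS HH Hcl Sp. destruct p as [x0 y0]. simpl.
  destruct (HS _ Sp) as [Hx0 _]. simpl in Hx0.
  destruct (gap k (fun i => S (x0, FF i x0)) (fun i => FF i x0) y0) as [e [He Hgap]].
  destruct (qn_dense y0 e He) as [n4 [Hd1 Hd2]]. set (d := qn n4) in *.
  assert (HnSd : ~ S (x0, d)).
  { intro Hs. destruct (HS _ Hs) as [_ [i [Hi Ei]]]. simpl in Ei.
    rewrite Ei in Hs, Hd1. pose proof (Hgap i Hi Hs Hd1). lra. }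
  destruct (Hcl _ HnSd) as [e1 [He1 Hball]]. simpl in Hball.
  destruct (HH _ Sp) as [h [Hhc [Hh0 Hhs]]]. simpl in Hh0.
  destruct (Hhc x0 Hx0 (d - y0) ltac:(lra)) as [d2 [Hd2' Hh2]].
  set (rho := Rmin e1 d2).
  assert (Hrho : 0 < rho) by (apply Rmin_pos; auto).
  destruct (qn_dense (x0 - rho) x0 ltac:(lra)) as [n1 [Ha1 Ha2]].
  destruct (qn_dense x0 (x0 + rho) ltac:(lra)) as [n3 [Hb1 Hb2]].
  exists n1, n3, n4. fold d.
  assert (HI : forall y, Rmax 0 (qn n1) <= y <= Rmin r (qn n3) -> 0 <= y <= r /\ Rabs (y - x0) < rho).
  { intros y Hy. pose proof (Rmax_l 0 (qn n1)). pose proof (Rmax_r 0 (qn n1)).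
    pose proof (Rmin_l r (qn n3)). pose proof (Rmin_r r (qn n3)).
    split; [lra|]. apply Rabs_def1; lra. }
  assert (Hxin : Rmax 0 (qn n1) <= x0 <= Rmin r (qn n3)).
  { split; [apply Rmax_lub; lra| apply Rmin_glb; lra]. }
  assert (Hcond : Cond S r (qn n1) (qn n3) d).
  { split; [lra|]. split.
    - intros y Hy. destruct (HI y Hy) as [Hy0 Hyr].
      exists (h y). split; [apply Hhs; auto|].
      assert (Rabs (y - x0) < d2) by (pose proof (Rmin_r e1 d2); unfold rho in Hyr; lra).
      pose proof (Hh2 y Hy0 H) as Hk. apply Rabs_def2 in Hk. lra.
    - intros y Hy Hs. destruct (HI y Hy) as [Hy0 Hyr].
      apply (Hball (y, d) ); auto. simpl.
      assert (Rabs (y - x0) < e1) by (pose proof (Rmin_l e1 d2); unfold rho in Hyr; lra).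
      replace (d - d) with 0 by ring. apply Rabs_def2 in H.
      replace ((y - x0) ^ 2) with ((y - x0) * (y - x0)) by ring.
      replace (e1 ^ 2) with (e1 * e1) by ring. replace (0 ^ 2) with 0 by ring. nra. }
  split; [exact Hcond|]. split; [exact Hxin|].
  destruct (umax_spec S r k FF x0 d HS (ex_intro _ y0 (conj Sp Hd1))) as [Su [Lu Mu]].
  pose proof (Mu y0 Sp Hd1).
  destruct (Rle_or_lt (umax S d x0) y0) as [Hle|Hlt]; [lra|].
  exfalso. destruct (HS _ Su) as [_ [i [Hi Ei]]]. simpl in Ei.
  rewrite Ei in Su, Hlt, Lu. pose proof (Hgap i Hi Su Hlt). lra.
Qed.


Lemma rotate0 q : rotate 0 q = q.
Proof. destruct q as [x y]. unfold rotate. rewrite cos_0, sin_0. simpl. f_equal; ring. Qed.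

Definition Pn (S : R * R -> Prop) r (p0 : R * R) a b d : R * R -> Prop :=
  fun p => (Cond S r a b d /\ Rmax 0 a <= fst p <= Rmin r b /\ snd p = umax S d (fst p)) \/
           (~ Cond S r a b d /\ p = p0).

Definition Pidx (S : R * R -> Prop) r p0 (n : nat) : R * R -> Prop :=
  let (n1, n2) := Cantor.of_nat n in
  let (n3, n4) := Cantor.of_nat n2 in Pn S r p0 (qn n1) (qn n3) (qn n4).

Theorem corollary5p4 (S : R * R -> Prop) :
  s_set S ->
  exists P : nat -> (R * R -> Prop),
    (forall n, DC_graph (P n)) /\
    (forall p, S p <-> exists n, P n p).
Proof.
  intros [[p0 Hp0] [Hcl [r [Hr [[k [f [Hf Hcov]]] [H [HHc HS]]]]]]].
  set (FF := fun i => epsilon (inhabits (fun _ : R => 0))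
                 (fun G => DC_R G /\ forall x, Icc 0 r x -> f i x = G x)).
  assert (HFF : forall i, (i < k)%nat -> DC_R (FF i) /\ forall x, Icc 0 r x -> f i x = FF i x).
  { intros i Hi. unfold FF. apply epsilon_spec. destruct (Hf i Hi) as [[G [HG E]] _].
    exists G; split; auto. }
  assert (Hsub : Ssub S r k FF).
  { intros p Sp. destruct (Hcov p Sp) as [i [Hi [Hx E]]]. split; [exact Hx|].
    exists i. split; auto. rewrite E. apply HFF; auto. }
  assert (HH : HHprop S r).
  { intros p Sp. destruct (proj1 (HS p) Sp) as [h [Hh [Hx E]]].
    exists h. split; [apply HHc; auto|]. split; [auto|].
    intros y Hy. apply HS. exists h. split; auto. split; auto. }
  assert (HFF' : forall i, (i < k)%nat -> DC_R (FF i)) by (intros; apply HFF; auto).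
  exists (Pidx S r p0). split.
  - intro n. unfold Pidx. destruct (Cantor.of_nat n) as [n1 n2]. destruct (Cantor.of_nat n2) as [n3 n4].
    set (a := qn n1). set (b := qn n3). set (d := qn n4).
    destruct (classic (Cond S r a b d)) as [Hc|Hnc].
    + exists 0, (Rmax 0 a), (Rmin r b), (umax S d). split; [apply Hc|].
      split; [apply (u_DCR S r k FF); auto|].
      intros p. split.
      * intros [[_ [Hp1 Hp2]]|[Hn _]]; [|tauto].
        exists p. split; [split; auto| rewrite rotate0; auto].
      * intros [q [[Hq1 Hq2] ->]]. rewrite rotate0. left. split; auto.
    + exists 0, (fst p0), (fst p0), (fun _ => snd p0). split; [lra|].
      split. { exists (fun _ => snd p0). split; [apply DC_const| auto]. }
      intros p. split.
      * intros [[Hc _]|[_ ->]]; [tauto|].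
        exists p0. split; [split; [unfold Icc; lra| auto]| rewrite rotate0; auto].
      * intros [q [[Hq1 Hq2] ->]]. rewrite rotate0. right. split; auto.
        destruct q as [x y], p0 as [x0 y0]. unfold Icc in Hq1. simpl in *. f_equal; [lra| auto].
  - intro p. split.
    + intro Sp. destruct (cover S r k FF p Hsub HH Hcl Sp) as [n1 [n3 [n4 [Hc [Hin Hu]]]]].
      exists (Cantor.to_nat (n1, Cantor.to_nat (n3, n4))). unfold Pidx.
      rewrite !Cantor.cancel_of_to. left. auto.
    + intros [n Hn]. unfold Pidx in Hn. destruct (Cantor.of_nat n) as [n1 n2].
      destruct (Cantor.of_nat n2) as [n3 n4].
      destruct Hn as [[Hc [Hin Hu]]|[_ ->]]; [|exact Hp0].
      destruct p as [x y]. simpl in *. subst y.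
      destruct Hc as [Hab [Hex Hnd]].
      apply (umax_spec S r k FF x (qn n4) Hsub (Hex x Hin)).
Qed.
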